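(* Let $\Gamma=(V,E)$ be a finite simple graph on $V=\{1,\dots,n\}$, let $\omega$ be the clique number of $\Gamma$ (the largest size of a clique in $\Gamma$), and let $\{T_j\}_{j=1}^n$ be a $\Gamma$-family on a Hilbert space $\mathcal{H}$ satisfying the weak Brehmer's condition. Then for each $m\geq1$ and each $h\in\mathcal{H}$, \[\sum_{p\in A_\Gamma^+,\ |p|=m}\|T_p^*h\|^2\leq\binom{\omega+m-1}{m}\|h\|^2.\]
   Context: $A_\Gamma^+=\langle e_1,\dots,e_n : e_ie_j=e_je_i \text{ if } ij\in E\rangle$ is the right-angled Artin monoid; $|p|$ denotes the total number of generators in any expression of $p$ as a product of generators (well-defined), with $|1|=0$. A $\Gamma$-family is a family of contractions $T_1,\dots,T_n$ on $\mathcal{H}$ with $T_iT_j=T_jT_i$ whenever $ij\in E$; it defines a unital representation $p\mapsto T_p$ of $A_\Gamma^+$ with $T_{e_i}=T_i$. For a finite $U\subset A_\Gamma^+$, $\vee U=\infty$ if $\bigcap_{p\in U}pA_\Gamma^+=\emptyset$, otherwise $\vee U$ is the unique $r$ with $\bigcap_{p\in U}pA_\Gamma^+=rA_\Gamma^+$ ($\vee\emptyset=1$); $T_{\vee U}:=0$ if $\vee U=\infty$. For a set $U$ of generators, $\vee U<\infty$ iff the corresponding vertices form a clique, and then $\vee U=\prod_{e_i\in U}e_i$. The complement graph $\Gamma^c$ has vertex set $V$ and edges $\{ij: i\ne j,\ ij\notin E\}$. Weak Brehmer's condition: for each vertex set $V_i$ of a connected component of $\Gamma^c$, with $\Gamma_i=\Gamma|_{V_i}$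 (the induced subgraph), and for each clique $W$ of $\Gamma_i$ (including $W=\emptyset$), setting $N_{\Gamma_i}(W)=\{e_j: j\in V_i,\ jk\in E \text{ for all } k\in W\}$, one has $\sum_{U\subseteq N_{\Gamma_i}(W)}(-1)^{|U|}T_{\vee U}T_{\vee U}^*\geq0$. *)

(* Defs.v *)
From HB Require Import structures.
From mathcomp Require Import all_boot all_order all_algebra.
From mathcomp Require Import reals.
From mathcomp.real_closed Require Import complex.
Set Implicit Arguments. Unset Strict Implicit. Unset Printing Implicit Defensive.
Import Order.TTheory GRing.Theory Num.Theory.
Local Open Scope ring_scope.

Section Hilbert.
Variables (R : realType) (H : lmodType R[i]) (ip : H -> H -> R[i]).

Definition is_inner_product : Prop :=
  [/\ forall (a : R[i]) (x y z : H), ip (a *: x + y) z = a * ip x z + ip y z,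
      forall x y : H, ip y x = ((ip x y)^*)%C,
      forall x : H, 0 <= ip x x
    & forall x : H, ip x x = 0 -> x = 0].

Definition hnorm (x : H) : R := Num.sqrt (complex.Re (ip x x)).

Definition hilbert_complete : Prop :=
  forall u : nat -> H,
    (forall eps : R, 0 < eps -> exists N : nat,
        forall p q : nat, (N <= p)%N -> (N <= q)%N -> hnorm (u p - u q) < eps) ->
    exists l : H, forall eps : R, 0 < eps -> exists N : nat,
        forall p : nat, (N <= p)%N -> hnorm (u p - l) < eps.

Definition is_linear_op (T : H -> H) : Prop :=
  forall (a : R[i]) (x y : H), T (a *: x + y) = a *: T x + T y.

Definition is_adjoint (T Ts : H -> H) : Prop :=
  forall x y : H, ip (T x) y = ip x (Ts y).

Definition is_contraction (T : H -> H) : Prop :=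
  forall x : H, hnorm (T x) <= hnorm x.

Definition is_positive_op (A : H -> H) : Prop := forall h : H, 0 <= ip (A h) h.

End Hilbert.

Section Graph.
Variables (n : nat) (e : rel 'I_n).

Definition simple_graph : Prop := symmetric e /\ irreflexive e.

Definition is_clique (W : {set 'I_n}) : bool :=
  [forall i in W, forall j in W, (i != j) ==> e i j].

Definition clique_number : nat := \max_(W : {set 'I_n} | is_clique W) #|W|.

Definition compl_rel : rel 'I_n := fun i j => (i != j) && ~~ e i j.

Definition compl_component (v : 'I_n) : {set 'I_n} := [set u | connect compl_rel v u].

Definition nbhd_in (Vi W : {set 'I_n}) : {set 'I_n} :=
  [set j in Vi | [forall k in W, e j k]].

(* ---- words in the generators; A_Gamma^+ elements of length m are classes of
   words of length m modulo swapping adjacent commuting letters ---- *)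
Definition swap_at (k : nat) (s : seq 'I_n) : seq 'I_n :=
  take k s ++ rev (take 2 (drop k s)) ++ drop k.+2 s.

Definition swappable_at (k : nat) (s : seq 'I_n) : bool :=
  if drop k s is a :: b :: _ then e a b else false.

Definition word_step (m : nat) : rel (m.-tuple 'I_n) :=
  fun w w' => [exists k : 'I_m, swappable_at k w && (val w' == swap_at k w)].

End Graph.

Section Family.
Variables (R : realType) (H : lmodType R[i]) (n : nat).
Variables (T Ts : 'I_n -> H -> H).

Definition Tword (s : seq 'I_n) (h : H) : H := foldr (fun i x => T i x) h s.
(* T_p^* = T_{s_k}^* ... T_{s_0}^*  applied to h *)
Definition Tsword (s : seq 'I_n) (h : H) : H := foldl (fun x i => Ts i x) h s.

(* T_{vee U} T_{vee U}^* for a set U of generators: vee U = prod_{i in U} e_i if U is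
   a clique, and vee U = infinity (T_{vee U} = 0) otherwise *)
Definition TjoinTjoinstar (e : rel 'I_n) (U : {set 'I_n}) (h : H) : H :=
  if is_clique e U then Tword (enum U) (Tsword (enum U) h) else 0.

Definition Gamma_family (ip : H -> H -> R[i]) (e : rel 'I_n) : Prop :=
  [/\ forall i, is_linear_op (T i),
      forall i, is_adjoint ip (T i) (Ts i),
      forall i, is_contraction ip (T i)
    & forall i j, e i j -> forall h, T i (T j h) = T j (T i h)].

Definition weak_Brehmer (ip : H -> H -> R[i]) (e : rel 'I_n) : Prop :=
  forall (v : 'I_n) (W : {set 'I_n}),
    let Vi := compl_component e v in
    W \subset Vi -> is_clique e W ->
    is_positive_op ip (fun h =>
      \sum_(U : {set 'I_n} | U \subset nbhd_in e Vi W)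
         (-1) ^+ #|U| *: TjoinTjoinstar e U h).

End Family.

(* Main.v *)
Require Import Defs.
From HB Require Import structures.
From mathcomp Require Import all_boot all_order all_algebra.
From mathcomp Require Import reals.
From mathcomp.real_closed Require Import complex.
From Stdlib Require Import FunctionalExtensionality.
Set Implicit Arguments. Unset Strict Implicit. Unset Printing Implicit Defensive.
Import Order.TTheory GRing.Theory Num.Theory.


Section Words.
Variables (n : nat) (e : rel 'I_n).
Hypothesis esym : symmetric e.
Hypothesis eirr : irreflexive e.

Definition prj (a b : 'I_n) (w : seq 'I_n) := filter (pred2 a b) w.
Definition eqv (w w' : seq 'I_n) : bool :=
  [forall a, forall b, ~~ e a b ==> (prj a b w == prj a b w')].

Lemma eqvP w w' : reflect (forall a b, ~~ e a b -> prj a b w = prj a b w') (eqv w w').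
Proof.
apply: (iffP forallP) => [H a b nab|H a].
  by move: (H a) => /forallP /(_ b); rewrite nab /= => /eqP.
by apply/forallP => b; apply/implyP => nab; apply/eqP; apply: H.
Qed.

Lemma eqv_refl w : eqv w w.
Proof. by apply/eqvP. Qed.
Lemma eqv_sym w w' : eqv w w' = eqv w' w.
Proof. by apply/eqvP/eqvP => H a b nab; rewrite H. Qed.
Lemma eqv_trans w1 w2 w3 : eqv w1 w2 -> eqv w2 w3 -> eqv w1 w3.
Proof. by move=> /eqvP H1 /eqvP H2; apply/eqvP => a b nab; rewrite H1 // H2. Qed.
Lemma eqv_cat u u' v v' : eqv u u' -> eqv v v' -> eqv (u ++ v) (u' ++ v').
Proof.
by move=> /eqvP H1 /eqvP H2; apply/eqvP => a b nab; rewrite /prj !filter_cat -!/(prj _ _ _) H1 // H2.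
Qed.

Lemma catI_l (T : Type) (s a b : seq T) : s ++ a = s ++ b -> a = b.
Proof. by elim: s => //= x s IH [] /IH. Qed.
Lemma catI_r (T : Type) (s a b : seq T) : a ++ s = b ++ s -> a = b.
Proof.
move=> H; have: rev s ++ rev a = rev s ++ rev b by rewrite -!rev_cat H.
by move/catI_l => /(congr1 rev); rewrite !revK.
Qed.

Lemma eqv_catIr u u' s : eqv (u ++ s) (u' ++ s) -> eqv u u'.
Proof.
move=> /eqvP H; apply/eqvP => a b nab; move: (H a b nab).
by rewrite /prj !filter_cat => /catI_r.
Qed.

Lemma eqv_count w w' a : eqv w w' -> count_mem a w = count_mem a w'.
Proof.
move=> /eqvP /(_ a a); rewrite eirr => /(_ isT) H.
have E s : count_mem a s = size (prj a a s).
  by rewrite /prj size_filter; apply: eq_count => x /=; rewrite orbb.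
by rewrite !E H.
Qed.

Lemma eqv_perm w w' : eqv w w' -> perm_eq w w'.
Proof.
move=> H; apply/allP => x _ /=; apply/eqP; exact: eqv_count.
Qed.

Lemma eqv_size w w' : eqv w w' -> size w = size w'.
Proof. by move/eqv_perm/perm_size. Qed.

Lemma eqv_mem w w' x : eqv w w' -> (x \in w) = (x \in w').
Proof. by move/eqv_perm/perm_mem. Qed.

Lemma prj_nil a b s : ~~ has (pred2 a b) s -> prj a b s = [::].
Proof. by rewrite has_filter negbK => /eqP. Qed.

Lemma eqv_move b s : (forall y, y \in s -> e b y) -> eqv (b :: s) (rcons s b).
Proof.
move=> Hs; apply/eqvP => c d ncd; rewrite /prj filter_rcons /=.
case: ifP => Hb; last by [].
have -> : [seq x <- s | pred2 c d x] = [::].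
  apply: prj_nil; apply/hasPn => y ys /=; apply/negP => /orP [] /eqP Ey; subst y;
  move: (Hs _ ys) Hb => ebc /orP [] /eqP Eb; subst b.
  1-4: by move: ebc ncd; rewrite ?eirr //; rewrite ?(esym d c) => ->.
by [].
Qed.

Lemma perm_const (s s' : seq 'I_n) x : perm_eq s s' -> all (pred1 x) s -> s = s'.
Proof.
move=> P A; have A' : all (pred1 x) s' by rewrite -(perm_all _ P).
by rewrite (all_pred1P _ _ A) (all_pred1P _ _ A') (perm_size P).
Qed.

Lemma eqv_clique s s' : perm_eq s s' ->
  (forall x y, x \in s -> y \in s -> x != y -> e x y) -> eqv s s'.
Proof.
move=> P C; apply/eqvP => c d ncd.
have [x Ax] : exists x, all (pred1 x) (prj c d s).
  case cs: (c \in s).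
    exists c; apply/allP => y; rewrite mem_filter => /andP [/orP [] /eqP -> ys] //=.
    by apply/negPn/negP => ndc; move: (C _ _ cs ys); rewrite eq_sym ndc => /(_ isT); rewrite (negbTE ncd).
  exists d; apply/allP => y; rewrite mem_filter => /andP [/orP [] /eqP -> ys] //=.
  by rewrite ys in cs.
apply: (perm_const (x:=x)) => //; exact: perm_filter.
Qed.

Lemma last_occ (P : pred 'I_n) w : has P w ->
  exists u x z, [/\ w = u ++ x :: z, P x & ~~ has P z].
Proof.
elim/last_ind: w => // w c IH; rewrite -cats1 has_cat /= orbF.
case Pc: (P c).
  by move=> _; exists w, c, [::]; rewrite Pc.
rewrite orbF => /IH [u [x [z [-> Px Nz]]]].
exists u, x, (z ++ [:: c]); split => //; first by rewrite -catA.
by rewrite has_cat /= Pc (negbTE Nz).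
Qed.

Lemma lastP_all (s : seq 'I_n) y d : all (pred1 y) s -> s != [::] -> last d s = y.
Proof.
elim/last_ind: s => // s c _; rewrite last_rcons -cats1 all_cat /= andbT.
by move=> /andP [_ /eqP].
Qed.

Lemma eqv_lastocc w v x : eqv w (rcons v x) ->
  exists u z, w = u ++ x :: z /\ (forall y, y \in z -> e x y).
Proof.
move=> H.
have xw : has (pred1 x) w by rewrite has_pred1 (eqv_mem _ H) mem_rcons mem_head.
have [u [x' [z [Ew /eqP Ex Nz]]]] := last_occ xw; subst x' w.
exists u, z; split => // y yz; apply/negPn/negP => nxy.
move/eqvP: H => /(_ x y nxy).
rewrite /prj filter_cat filter_rcons /= !eqxx /= => E.
have nyx : y != x by apply: contraNneq Nz => <-; apply/hasP; exists y => //=.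
have ne : [seq t <- z | pred2 x y t] != [::].
  by rewrite -has_filter; apply/hasP; exists y => //=; rewrite eqxx orbT.
have Al : all (pred1 y) [seq t <- z | pred2 x y t].
  apply/allP => t; rewrite mem_filter => /andP [/orP [] /eqP -> tz] //=.
  by move: Nz => /hasPn /(_ _ tz); rewrite /= eqxx.
move: (congr1 (last x) E); rewrite last_rcons last_cat /= (lastP_all _ Al ne).
by move=> Eyx; rewrite Eyx eqxx in nyx.
Qed.


Lemma eqv_last2 q p a p' b : eqv q (rcons p a) -> eqv q (rcons p' b) -> a != b -> e a b.
Proof.
move=> H1 H2 nab; apply/negPn/negP => nab'.
have H : eqv (rcons p a) (rcons p' b) by apply: eqv_trans H2; rewrite eqv_sym.
move/eqvP: H => /(_ a b nab'); rewrite /prj !filter_rcons /= !eqxx orbT /=.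
by move/rcons_inj => [_ Eab]; rewrite Eab eqxx in nab.
Qed.

Lemma split_notin (p s u z : seq 'I_n) b : p ++ s = u ++ b :: z -> b \notin s ->
  exists z', p = u ++ b :: z' /\ z = z' ++ s.
Proof.
elim: u p => [|c u IH] [|d p] /=.
- by move=> -> ; rewrite mem_head.
- by move=> [-> <-] _; exists p.
- by move=> -> ; rewrite inE mem_cat mem_head !orbT.
- move=> [-> E] bs; have [z' [-> ->]] := IH _ E bs; by exists z'.
Qed.

Lemma move_out q p s p' b : eqv q (p ++ s) -> eqv q (rcons p' b) -> b \notin s ->
  (forall y, y \in s -> e b y) /\ exists p'', eqv q (p'' ++ rcons s b).
Proof.
move=> H1 H2 bs.
have H : eqv (p ++ s) (rcons p' b) by apply: eqv_trans H2; rewrite eqv_sym.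
have [u [z [E Hz]]] := eqv_lastocc H.
have [z' [Ep Ez]] := split_notin E bs; subst p z.
split; first by move=> y ys; apply: Hz; rewrite mem_cat ys orbT.
exists (u ++ z'); apply: (eqv_trans H1).
rewrite -!catA /= -rcons_cat; apply: eqv_cat; first exact: eqv_refl.
by apply: eqv_move => y yz; apply: Hz.
Qed.

Inductive sw : seq 'I_n -> seq 'I_n -> Prop :=
| sw_refl w : sw w w
| sw_swap u v a b : e a b -> sw (u ++ a :: b :: v) (u ++ b :: a :: v)
| sw_trans w1 w2 w3 : sw w1 w2 -> sw w2 w3 -> sw w1 w3.

Lemma sw_catl u v v' : sw v v' -> sw (u ++ v) (u ++ v').
Proof.
elim=> [w|u0 v0 a b eab|w1 w2 w3 _ IH1 _ IH2]; first exact: sw_refl.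
  by rewrite !catA; apply: sw_swap.
exact: sw_trans IH1 IH2.
Qed.

Lemma sw_catr u u' v : sw u u' -> sw (u ++ v) (u' ++ v).
Proof.
elim=> [w|u0 v0 a b eab|w1 w2 w3 _ IH1 _ IH2]; first exact: sw_refl.
  by rewrite -!catA /=; apply: sw_swap.
exact: sw_trans IH1 IH2.
Qed.

Lemma sw_move b s : (forall y, y \in s -> e b y) -> sw (b :: s) (rcons s b).
Proof.
elim: s => [|c s IH] H /=; first exact: sw_refl.
apply: (@sw_trans _ (c :: b :: s)); first exact: (@sw_swap [::] s b c (H _ (mem_head _ _))).
apply: (@sw_catl [:: c] (b :: s) (rcons s b)); apply: IH => y ys; apply: H; by rewrite in_cons ys orbT.
Qed.

Lemma eqv_sw w w' : eqv w w' -> sw w w'.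
Proof.
elim/last_ind: w' w => [|v x IH] w H.
  by move: (eqv_size H) => /size0nil ->; apply: sw_refl.
have [u [z [Ew Hz]]] := eqv_lastocc H; subst w.
have E1 : eqv (u ++ x :: z) (u ++ rcons z x) by apply: eqv_cat; [apply: eqv_refl|apply: eqv_move].
have E2 : eqv (u ++ z) v.
  apply: (@eqv_catIr _ _ [:: x]); rewrite -catA !cats1 -rcons_cat.
  by apply: (eqv_trans _ H); rewrite eqv_sym rcons_cat.
apply: (@sw_trans _ (u ++ rcons z x)); first by apply: sw_catl; apply: sw_move.
by rewrite -cats1 catA !cats1 -!cats1; apply: sw_catr; apply: IH.
Qed.

Lemma sw_size w w' : sw w w' -> size w = size w'.
Proof. by elim=> // [u v a b _|w1 w2 w3 _ -> _ ->] //; rewrite !size_cat. Qed.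

Lemma step_eqv m (t t' : m.-tuple 'I_n) : word_step e t t' -> eqv t t'.
Proof.
move=> /existsP [k /andP [Hs /eqP ->]].
rewrite /swap_at; move: Hs; rewrite /swappable_at.
case E: (drop k t) => [|a s] //.
case: s E => [|b r] E eab; first by move: eab.
have Er : drop k.+2 t = r by rewrite -add2n -drop_drop E /= drop0.
rewrite Er -[X in eqv X _](cat_take_drop k t) E.
apply: eqv_cat; first exact: eqv_refl.
have -> : take 2 [:: a, b & r] = [:: a; b] by rewrite /= take0.
rewrite -[a :: b :: r]/([:: a; b] ++ r); apply: eqv_cat; last exact: eqv_refl.
by apply: (@eqv_move a [:: b]) => y; rewrite inE => /eqP ->.
Qed.

Lemma connect_eqv m (t t' : m.-tuple 'I_n) : connect (@word_step n e m) t t' -> eqv t t'.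
Proof.
move=> /connectP [p]; elim: p t => [|t2 p IH] t /=; first by move=> _ ->; apply: eqv_refl.
by move=> /andP [st pt] E; apply: eqv_trans (step_eqv st) (IH _ pt E).
Qed.

Lemma sw_connect m w w' : sw w w' -> forall (t t' : m.-tuple 'I_n),
  val t = w -> val t' = w' -> connect (@word_step n e m) t t'.
Proof.
elim=> [w0|u v a b eab|w1 w2 w3 S1 IH1 S2 IH2] t t' Et Et'.
- by have -> : t = t' by apply: val_inj; rewrite Et Et'.
- apply: connect1; apply/existsP.
  have Hk : size u < m by rewrite -(size_tuple t) Et size_cat /= addnS ltnS leq_addr.
  exists (Ordinal Hk); rewrite /swappable_at /swap_at /= Et Et'.
  rewrite drop_size_cat // eab /= take_size_cat //.
  rewrite -add2n -drop_drop drop_size_cat //= take0 drop0.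
  by apply/eqP.
- have Hs : size w2 == m by rewrite -(sw_size S1) -Et size_tuple.
  exact: connect_trans (IH1 t (Tuple Hs) Et erefl) (IH2 (Tuple Hs) t' erefl Et').
Qed.

Lemma eqv_connect m (t t' : m.-tuple 'I_n) : eqv t t' = connect (@word_step n e m) t t'.
Proof.
apply/idP/idP; last exact: connect_eqv.
by move/eqv_sw => S; apply: sw_connect S _ _ erefl erefl.
Qed.

End Words.


Section Sums.
Variables (n : nat) (e : rel 'I_n).
Hypothesis esym : symmetric e.
Hypothesis eirr : irreflexive e.
Variable R : numFieldType.
Local Open Scope ring_scope.

Local Notation eqv := (eqv e).

Lemma cliqueP (U : {set 'I_n}) :
  reflect (forall i j, i \in U -> j \in U -> i != j -> e i j) (is_clique e U).
Proof.
apply: (iffP forall_inP) => [H i j iU jU nij | H i iU].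
  by move: (H i iU) => /forall_inP /(_ j jU) /implyP; apply.
by apply/forall_inP => j jU; apply/implyP; apply: H.
Qed.

Definition tog (a : 'I_n) (K : {set 'I_n}) := if a \in K then K :\ a else a |: K.

Lemma togK a : involutive (tog a).
Proof.
move=> K; rewrite /tog; case aK: (a \in K).
  by rewrite setD11 setD1K.
by rewrite setU11 setU1K ?aK.
Qed.

Lemma sign_tog a K : (-1) ^+ #|tog a K| = - (-1) ^+ #|K| :> R.
Proof.
rewrite /tog; case: ifP => aK.
  by rewrite [in RHS](cardsD1 a K) aK add1n exprS mulN1r opprK.
by rewrite cardsU1 aK /= add1n exprS mulN1r.
Qed.

Lemma tog_sum (P : pred {set 'I_n}) (F : {set 'I_n} -> R) a :
  (forall K, P (tog a K) = P K) -> (forall K, P K -> F (tog a K) = - F K) ->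
  \sum_(K | P K) F K = 0.
Proof.
move=> HP HF.
have E : \sum_(K | P K) F K = - \sum_(K | P K) F K.
  rewrite {1}(reindex_inj (inv_inj (togK a))) /= -sumrN.
  by apply: eq_big => K; [rewrite HP | rewrite HP => PK; rewrite HF].
by move/eqP: E; rewrite -addr_eq0 -mulr2n mulrn_eq0 /= => /eqP.
Qed.

Lemma tog_sub a (K L : {set 'I_n}) : a \in L -> (tog a K \subset L) = (K \subset L).
Proof.
move=> aL; rewrite /tog; case: ifP => aK; apply/subsetP/subsetP => H x.
- by move=> xK; case: (eqVneq x a) => [->//|nxa]; apply: H; rewrite !inE nxa.
- by rewrite !inE => /andP [_ /H].
- by move=> xK; apply: H; rewrite !inE xK orbT.
- by rewrite !inE => /orP [/eqP ->//|/H].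
Qed.

Lemma sum_sign_sub (L : {set 'I_n}) :
  \sum_(U : {set 'I_n} | U \subset L) (-1) ^+ #|U| = (L == set0)%:R :> R.
Proof.
case: (set_0Vmem L) => [->|[a aL]].
  rewrite eqxx (big_pred1 set0) ?cards0 ?expr0 // => U /=.
  by rewrite subset0.
have -> : (L == set0) = false by apply/negbTE/set0Pn; exists a.
apply: (tog_sum (a := a)) => K; first by rewrite tog_sub.
by move=> _; rewrite sign_tog.
Qed.

Lemma enum_rcons_eqv U a : is_clique e U -> a \in U ->
  eqv (enum U) (rcons (enum (U :\ a)) a).
Proof.
move=> /cliqueP cU aU; apply: eqv_clique => //.
  apply: uniq_perm; first exact: enum_uniq.
    by rewrite rcons_uniq mem_enum setD11 enum_uniq.
  move=> x; rewrite mem_rcons in_cons !mem_enum in_setD1.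
  by case: (eqVneq x a) => [->|].
by move=> x y; rewrite !mem_enum; apply: cU.
Qed.

Lemma char_fwd q p U a : is_clique e U -> eqv q (p ++ enum U) -> a \in U ->
  exists p', eqv q (rcons p' a).
Proof.
move=> cU H aU; exists (p ++ enum (U :\ a)); apply: (eqv_trans H).
by rewrite rcons_cat; apply: eqv_cat; [apply: eqv_refl|apply: enum_rcons_eqv].
Qed.

Lemma lastin_clique q (U : {set 'I_n}) :
  (forall a, a \in U -> exists p, eqv q (rcons p a)) -> is_clique e U.
Proof.
move=> HU; apply/cliqueP => i j iU jU nij.
have [p1 H1] := HU i iU; have [p2 H2] := HU j jU.
exact: eqv_last2 H1 H2 nij.
Qed.

Lemma char_bwd q (U : {set 'I_n}) :
  (forall a, a \in U -> exists p, eqv q (rcons p a)) -> exists p, eqv q (p ++ enum U).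
Proof.
move: {2}#|U| (erefl #|U|) => k; elim: k U => [|k IH] U cU HU.
  by rewrite (cards0_eq cU) enum_set0; exists q; rewrite cats0 eqv_refl.
have [b bU] : exists b, b \in U by apply/card_gt0P; rewrite cU.
have cU' : #|U :\ b| = k by move: cU; rewrite (cardsD1 b U) bU add1n => [[]].
have [p Hp] : exists p, eqv q (p ++ enum (U :\ b)).
  by apply: IH cU' _ => a; rewrite in_setD1 => /andP [_ /HU].
have [p' Hp'] := HU b bU.
have bn : b \notin enum (U :\ b) by rewrite mem_enum setD11.
have [_ [p'' Hp'']] := move_out esym eirr Hp Hp' bn.
exists p''; apply: (eqv_trans Hp''); apply: eqv_cat; first exact: eqv_refl.
by rewrite eqv_sym; apply: enum_rcons_eqv bU; apply: (lastin_clique HU).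
Qed.


Definition cls k (w : seq 'I_n) : nat := #|[set t : k.-tuple 'I_n | eqv t w]|.
Definition allin (S : {set 'I_n}) (w : seq 'I_n) := all (fun x => x \in S) w.
Definition csum k (S : {set 'I_n}) (f : seq 'I_n -> R) : R :=
  \sum_(t : k.-tuple 'I_n | allin S t) f t / (cls k t)%:R.

Lemma cls_eqv k w w' : eqv w w' -> cls k w = cls k w'.
Proof.
move=> H; rewrite /cls; apply: eq_card => t; rewrite !inE.
apply/idP/idP => H'; first exact: eqv_trans H' H.
by apply: eqv_trans H' _; rewrite eqv_sym.
Qed.

Lemma cls_gt0 k w : size w = k -> (0 < cls k w)%N.
Proof.
move=> Hs; apply/card_gt0P; have Hs' : size w == k by apply/eqP.
by exists (Tuple Hs'); rewrite inE; exact: eqv_refl.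
Qed.

Lemma cls_neq0 k w : size w = k -> (cls k w)%:R != 0 :> R.
Proof. by move=> Hs; rewrite pnatr_eq0 -lt0n cls_gt0. Qed.

Lemma allin_eqv S w w' : eqv w w' -> allin S w = allin S w'.
Proof. by move/(eqv_perm eirr) => P; rewrite /allin (perm_all _ P). Qed.

Lemma tuple_of_seq k (w : seq 'I_n) : size w = k -> exists t : k.-tuple 'I_n, val t = w.
Proof. move=> Hs; have Hs' : size w == k by apply/eqP. by exists (Tuple Hs'). Qed.

Lemma sum_cls m (w : seq 'I_n) (c : R) : size w = m ->
  \sum_(q : m.-tuple 'I_n | eqv q w) c / (cls m q)%:R = c.
Proof.
move=> Hs.
rewrite (eq_bigr (fun _ => c / (cls m w)%:R)); last by move=> q Hq; rewrite (cls_eqv _ Hq).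
rewrite (eq_bigl (fun q => q \in [set q : m.-tuple 'I_n | eqv q w])); last by move=> q; rewrite inE.
by rewrite sumr_const -[#|_|]/(cls m w) -[X in X = c]mulr_natr mulfVK // cls_neq0.
Qed.

Lemma csum_suffix k m S (f : seq 'I_n -> R) (s : seq 'I_n) :
  (k + size s = m)%N -> allin S s -> (forall w w', eqv w w' -> f w = f w') ->
  csum k S (fun p => f (p ++ s)) =
  \sum_(q : m.-tuple 'I_n | allin S q)
     (f q / (cls m q)%:R * ([exists p : k.-tuple 'I_n, eqv q (p ++ s)])%:R).
Proof.
move=> Hm Ss Hf.
have E1 (p : k.-tuple 'I_n) : f (p ++ s) =
    \sum_(q : m.-tuple 'I_n) (if eqv q (p ++ s) then f q / (cls m q)%:R else 0).
  have Hsz : size (p ++ s) = m by rewrite size_cat size_tuple.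
  rewrite -big_mkcond /= (eq_bigr (fun q : m.-tuple 'I_n => f (p ++ s) / (cls m q)%:R)).
    by rewrite sum_cls.
  by move=> q Hq; rewrite (Hf _ _ Hq).
rewrite /csum (eq_bigr (fun p : k.-tuple 'I_n => \sum_(q : m.-tuple 'I_n)
     (if eqv q (p ++ s) then f q / (cls m q)%:R / (cls k p)%:R else 0))); last first.
  by move=> p _; rewrite E1 mulr_suml; apply: eq_bigr => q _; case: ifP; rewrite ?mul0r.
rewrite exchange_big /= [in RHS]big_mkcond /=; apply: eq_bigr => q _.
case: (boolP [exists p : k.-tuple 'I_n, eqv q (p ++ s)]) => [/existsP [p0 H0] | Hne].
  have Ec (p : k.-tuple 'I_n) : allin S p && eqv q (p ++ s) = allin S q && eqv p p0.
    have -> : eqv q (p ++ s) = eqv p p0.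
      apply/idP/idP => H.
        apply: (@eqv_catIr _ _ _ _ s); apply: eqv_trans _ H0; by rewrite eqv_sym.
      by apply: (eqv_trans H0); apply: eqv_cat; [rewrite eqv_sym | exact: eqv_refl].
    case E: (eqv p p0); rewrite ?andbF ?andbT //.
    have Hq : eqv q (p ++ s) by apply: (eqv_trans H0); apply: eqv_cat; [rewrite eqv_sym E | exact: eqv_refl].
    by rewrite (allin_eqv S Hq) /allin all_cat -/(allin S s) Ss andbT.
  rewrite big_mkcond /= (eq_bigr (fun p : k.-tuple 'I_n =>
     if allin S q && eqv p p0 then f q / (cls m q)%:R / (cls k p)%:R else 0)); last first.
    by move=> p _; rewrite -Ec; case: (allin S p); case: (eqv q (p ++ s)).
  case: (allin S q); last by rewrite big1 // => p _; rewrite andFb.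
  by rewrite -big_mkcond /= sum_cls ?size_tuple // mulr1.
rewrite mulr0 if_same big1 // => p _.
by move/existsPn: Hne => /(_ p) /negbTE ->.
Qed.


Lemma PQ (A S : {set 'I_n}) m (q : m.-tuple 'I_n) :
  A \subset S -> (forall a b, a \in A -> b \in S -> b \notin A -> e a b) -> allin S q ->
  \sum_(U : {set 'I_n} | is_clique e U && (U \subset A))
     (if (#|U| <= m)%N then (-1) ^+ #|U| *
        ([exists p : (m - #|U|).-tuple 'I_n, eqv q (p ++ enum U)])%:R else 0)
  = (~~ has (fun x => x \in A) q)%:R :> R.
Proof.
move=> AS Hadj Sq.
set L := [set a in A | [exists p : (m.-1).-tuple 'I_n, eqv q (rcons p a)]].
have HL a : a \in L -> exists p, eqv q (rcons p a).
  by rewrite inE => /andP [_ /existsP [p Hp]]; exists p.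
have HL' a : a \in A -> (exists p, eqv q (rcons p a)) -> a \in L.
  move=> aA [p Hp]; rewrite inE aA /=; apply/existsP.
  have Hs : size p = m.-1 by move: (eqv_size eirr Hp); rewrite size_rcons size_tuple => ->.
  by have [t Ht] := tuple_of_seq Hs; exists t; rewrite Ht.
have C1 (U : {set 'I_n}) : is_clique e U -> U \subset A ->
    andb (#|U| <= m)%N [exists p : (m - #|U|).-tuple 'I_n, eqv q (p ++ enum U)] = (U \subset L).
  move=> cU UA; apply/idP/idP.
    move=> /andP [_ /existsP [p Hp]]; apply/subsetP => a aU.
    by apply: HL' ((subsetP UA) a aU) _; exact: char_fwd cU Hp aU.
  move=> UL; have [p Hp] : exists p, eqv q (p ++ enum U).
    by apply: char_bwd => a /(subsetP UL) /HL.
  have Hs : size q = (size p + #|U|)%N by rewrite (eqv_size eirr Hp) size_cat cardE.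
  rewrite size_tuple in Hs.
  apply/andP; split; first by rewrite Hs leq_addl.
  have Hs' : size p = (m - #|U|)%N by rewrite Hs addnK.
  by have [t Ht] := tuple_of_seq Hs'; apply/existsP; exists t; rewrite Ht.
have C2 (U : {set 'I_n}) : U \subset L -> is_clique e U && (U \subset A).
  move=> UL.
  have -> : is_clique e U by apply: (@lastin_clique q) => a /(subsetP UL) /HL.
  by apply/subsetP => a /(subsetP UL); rewrite inE => /andP [].
rewrite (eq_bigr (fun U : {set 'I_n} => if U \subset L then (-1) ^+ #|U| else 0 : R)); last first.
  move=> U /andP [cU UA]; rewrite -(C1 U cU UA); case: ifP => Hle //=.
  by case: ifP => _; rewrite ?mulr1 ?mulr0.
have -> : \sum_(U : {set 'I_n} | is_clique e U && (U \subset A))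
     (if U \subset L then (-1) ^+ #|U| else 0) = \sum_(U : {set 'I_n} | U \subset L) (-1) ^+ #|U| :> R.
  rewrite big_mkcond [in RHS]big_mkcond; apply: eq_bigr => U _.
  by case UL: (U \subset L); [rewrite (C2 U UL) | case: (_ && _)].
rewrite sum_sign_sub.
suff -> : (L == set0) = ~~ has (fun x => x \in A) q by [].
case: (boolP (has (fun x => x \in A) q)) => Hh /=.
  have [u [x [z [Eq xA Nz]]]] := last_occ Hh.
  have xA' := xA.
  apply: negbTE; apply/set0Pn; exists x; apply: HL' xA _; exists (u ++ z).
  rewrite Eq rcons_cat; apply: eqv_cat; first exact: eqv_refl.
  apply: eqv_move => // y yz.
  have yS : y \in S.
    by move/allP: Sq => /(_ y); apply; rewrite Eq mem_cat in_cons yz !orbT.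
  have yA : y \notin A by move/hasPn: Nz => /(_ y yz).
  exact: Hadj xA' yS yA.
apply/eqP/setP => a; rewrite in_set0; apply: negbTE; apply/negP => aL.
have aA : a \in A by move: aL; rewrite inE => /andP [].
have [p Hp] := HL a aL.
move/hasPn: Hh => /(_ a); rewrite (eqv_mem eirr _ Hp) mem_rcons mem_head aA => /(_ isT).
by [].
Qed.

Lemma IA (A S : {set 'I_n}) (f : seq 'I_n -> R) m :
  A \subset S -> (forall a b, a \in A -> b \in S -> b \notin A -> e a b) ->
  (forall w w', eqv w w' -> f w = f w') ->
  \sum_(U : {set 'I_n} | is_clique e U && (U \subset A))
     (if (#|U| <= m)%N then (-1) ^+ #|U| * csum (m - #|U|) S (fun p => f (p ++ enum U)) else 0)
  = csum m (S :\: A) f.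
Proof.
move=> AS Hadj Hf.
rewrite (eq_bigr (fun U : {set 'I_n} => \sum_(q : m.-tuple 'I_n | allin S q) (f q / (cls m q)%:R *
    (if (#|U| <= m)%N then (-1) ^+ #|U| *
        ([exists p : (m - #|U|).-tuple 'I_n, eqv q (p ++ enum U)])%:R else 0)))); last first.
  move=> U /andP [cU UA]; case: ifP => Hle; last by rewrite big1 // => q _; rewrite mulr0.
  rewrite (csum_suffix (m := m)) //.
  - by rewrite mulr_sumr; apply: eq_bigr => q _; rewrite mulrCA.
  - by rewrite -cardE subnK.
  - by apply/allP => x; rewrite mem_enum => /(subsetP UA) /(subsetP AS).
rewrite exchange_big /= /csum.
rewrite (eq_bigr (fun q : m.-tuple 'I_n => f q / (cls m q)%:R *
   (~~ has (fun x => x \in A) q)%:R)); last first.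
  by move=> q Sq; rewrite -mulr_sumr (PQ AS Hadj Sq).
have Eall (q : seq 'I_n) : allin (S :\: A) q = allin S q && ~~ has (fun x => x \in A) q.
  by rewrite /allin -all_predC -all_predI; apply: eq_all => x; rewrite /= in_setD andbC.
rewrite big_mkcond [in RHS]big_mkcond; apply: eq_bigr => q _.
by rewrite Eall; case: (allin S q); case: (has _ _); rewrite /= ?mulr1 ?mulr0.
Qed.

End Sums.


Lemma hockey w m : (\sum_(i < m.+1) 'C(w + i - 1, i) = 'C(w + m, m))%N.
Proof.
elim: m => [|m IH]; first by rewrite big_ord1 !bin0.
by rewrite big_ord_recr /= IH !addnS subn1 /= binS addnC.
Qed.

Section Seqs.
Variable n : nat.
Variable R : realFieldType.
Local Open Scope ring_scope.

Definition psig (x : nat -> R) : nat -> R := fun m => \sum_(i < m.+1) x i.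
Definition Dk (K : {set 'I_n}) (x : nat -> R) : nat -> R := fun m =>
  \sum_(U : {set 'I_n} | U \subset K)
     (if (#|U| <= m)%N then (-1) ^+ #|U| * x (m - #|U|)%N else 0).

Lemma sig_tel y : psig (fun m => y m - (if m is m'.+1 then y m' else 0)) = y.
Proof.
apply: functional_extensionality => m; rewrite /psig.
elim: m => [|m IH]; first by rewrite big_ord1 subr0.
by rewrite big_ord_recr /= IH addrC subrK.
Qed.

Lemma Dk_split (K : {set 'I_n}) a x m : a \in K ->
  Dk K x m = Dk (K :\ a) x m - (if m is m'.+1 then Dk (K :\ a) x m' else 0).
Proof.
move=> aK; rewrite /Dk (bigID (fun U : {set 'I_n} => a \in U)) /= addrC.
congr (_ + _).
  by apply: eq_bigl => U; rewrite subsetD1.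
rewrite (reindex_inj (inv_inj (togK a))) /=.
rewrite (eq_bigl (fun U : {set 'I_n} => U \subset K :\ a)); last first.
  move=> U; rewrite tog_sub // subsetD1 /tog.
  by case: (a \in U) => /=; rewrite ?setD11 ?setU11 ?andbF ?andbT.
rewrite (eq_bigr (fun U : {set 'I_n} => - (if m is m'.+1 then
    (if (#|U| <= m')%N then (-1) ^+ #|U| * x (m' - #|U|)%N else 0) else 0))); last first.
  move=> U; rewrite subsetD1 => /andP [_ aU].
  rewrite /tog (negbTE aU) cardsU1 aU /= add1n.
  case: m => [|m] /=; first by rewrite oppr0.
  rewrite ltnS subSS; case: ifP => _; last by rewrite oppr0.
  by rewrite exprS mulN1r mulNr.
rewrite sumrN; case: m => [|m] /=; first by rewrite big1.
by [].
Qed.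

Lemma Dk_set0 x : Dk set0 x = x.
Proof.
apply: functional_extensionality => m; rewrite /Dk (big_pred1 set0).
  by rewrite cards0 leq0n expr0 mul1r subn0.
by move=> U; rewrite /= subset0.
Qed.

Lemma iter_sig_Dk (K : {set 'I_n}) x : iter #|K| psig (Dk K x) = x.
Proof.
move Ek: #|K| => k; elim: k K Ek => [|k IH] K cK.
  by rewrite (cards0_eq cK) Dk_set0.
have [a aK] : exists a, a \in K by apply/card_gt0P; rewrite cK.
have cK' : #|K :\ a| = k by move: cK; rewrite (cardsD1 a K) aK add1n => [[]].
rewrite iterSr.
have -> : Dk K x = (fun m => Dk (K :\ a) x m - (if m is m'.+1 then Dk (K :\ a) x m' else 0)).
  by apply: functional_extensionality => m; rewrite (Dk_split _ _ aK).
by rewrite sig_tel IH.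
Qed.

Lemma sig_ge0 x : (forall m, 0 <= x m) -> forall m, 0 <= psig x m.
Proof. by move=> H m; apply: sumr_ge0 => i _. Qed.

Lemma sig_ge x : (forall m, 0 <= x m) -> forall m, x m <= psig x m.
Proof.
move=> H m; rewrite /psig big_ord_recr /= lerDr.
by apply: sumr_ge0 => i _.
Qed.

Lemma sig_le x y : (forall m, x m <= y m) -> forall m, psig x m <= psig y m.
Proof. by move=> H m; apply: ler_sum => i _. Qed.

Lemma iter_sig_ge0 j x : (forall m, 0 <= x m) -> forall m, 0 <= iter j psig x m.
Proof. by elim: j => //= j IH H; apply: sig_ge0; apply: IH. Qed.

Lemma iter_sig_ge j x : (forall m, 0 <= x m) -> forall m, x m <= iter j psig x m.
Proof.
elim: j => //= j IH H m; apply: le_trans (IH H m) _.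
by apply: sig_ge; apply: iter_sig_ge0.
Qed.

Lemma iter_sig_le j x y : (forall m, x m <= y m) -> forall m, iter j psig x m <= iter j psig y m.
Proof. by elim: j => //= j IH H; apply: sig_le; apply: IH. Qed.

Lemma iter_sig_mono j j' x : (forall m, 0 <= x m) -> (j <= j')%N ->
  forall m, iter j psig x m <= iter j' psig x m.
Proof.
move=> H le m; rewrite -(subnK le) iterD; apply: iter_sig_ge.
exact: iter_sig_ge0.
Qed.

Lemma iter_sig_sum (I : finType) (P : pred I) (g : I -> nat -> R) j :
  iter j psig (fun m => \sum_(i | P i) g i m) = fun m => \sum_(i | P i) iter j psig (g i) m.
Proof.
elim: j => //= j ->; apply: functional_extensionality => m.
by rewrite /psig exchange_big.
Qed.

Lemma iter_sig_e0 (c : R) w m :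
  iter w psig (fun k => if k == 0%N then c else 0) m = ('C(w + m - 1, m))%:R * c.
Proof.
elim: w m => [|w IH] m /=.
  case: m => [|m]; first by rewrite bin0 mul1r.
  by rewrite add0n subn1 /= bin_small // mul0r.
rewrite /psig (eq_bigr (fun i : 'I_m.+1 => ('C(w + i - 1, i))%:R * c)); last by move=> i _; rewrite IH.
by rewrite -mulr_suml -natr_sum hockey addSn subn1.
Qed.

End Seqs.
Arguments psig {R} x _.


Section Main.
Variables (R : realType) (H : lmodType R[i]) (ip : H -> H -> R[i]).
Variables (n : nat) (e : rel 'I_n) (T Ts : 'I_n -> H -> H).
Hypothesis Hip : is_inner_product ip.
Hypothesis Hg : simple_graph e.
Hypothesis HF : Gamma_family T Ts ip e.
Local Open Scope ring_scope.

Let esym : symmetric e. Proof. by case: Hg. Qed.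
Let eirr : irreflexive e. Proof. by case: Hg. Qed.

Let ip_lin a x y z : ip (a *: x + y) z = a * ip x z + ip y z.
Proof. by case: Hip => H1 _ _ _; apply: H1. Qed.
Let ip_conj x y : ip y x = ((ip x y)^*)%C.
Proof. by case: Hip => _ H1 _ _; apply: H1. Qed.
Let ip_ge0 x : 0 <= ip x x.
Proof. by case: Hip => _ _ H1 _; apply: H1. Qed.
Let ip_def x : ip x x = 0 -> x = 0.
Proof. by case: Hip => _ _ _ H1; apply: H1. Qed.

Lemma ip0l z : ip 0 z = 0.
Proof.
have := ip_lin 1 0 0 z; rewrite scaler0 addr0 mul1r => E.
by apply: (@addrI _ (ip 0 z)); rewrite addr0 -E.
Qed.

Lemma ipDl x y z : ip (x + y) z = ip x z + ip y z.
Proof. by rewrite -[x]scale1r ip_lin mul1r scale1r. Qed.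

Lemma ipZl a x z : ip (a *: x) z = a * ip x z.
Proof. by rewrite -[a *: x]addr0 ip_lin ip0l addr0. Qed.

Lemma ipNl x z : ip (- x) z = - ip x z.
Proof. by rewrite -scaleN1r ipZl mulN1r. Qed.

Lemma ipBr x y z : ip x (y - z) = ip x y - ip x z.
Proof.
rewrite (ip_conj (y - z) x) (ip_conj y x) (ip_conj z x) ipDl ipNl.
exact: rmorphB.
Qed.

Lemma ip_sum (I : finType) (P : pred I) (F : I -> H) z :
  ip (\sum_(i | P i) F i) z = \sum_(i | P i) ip (F i) z.
Proof.
elim/big_rec2: _ => [|i y1 y2 _ <-]; first exact: ip0l.
exact: ipDl.
Qed.

Let Tlin i : is_linear_op (T i). Proof. by case: HF => H1 _ _ _; apply: H1. Qed.
Let Tadj i : is_adjoint ip (T i) (Ts i). Proof. by case: HF => _ H1 _ _; apply: H1. Qed.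
Let Tcomm i j : e i j -> forall h, T i (T j h) = T j (T i h). Proof. by case: HF => _ _ _ H1; apply: H1. Qed.

Lemma Ts_comm a b y : e a b -> Ts a (Ts b y) = Ts b (Ts a y).
Proof.
move=> eab; apply/eqP; rewrite -subr_eq0; apply/eqP/ip_def.
set D := _ - _.
by rewrite {2}/D ipBr -!Tadj (Tcomm eab) subrr.
Qed.

Lemma Tsword_sw w w' y : sw e w w' -> Tsword Ts w y = Tsword Ts w' y.
Proof.
move=> S; elim: S y => [w0|u v a b eab|w1 w2 w3 _ IH1 _ IH2] y //.
  by rewrite /Tsword !foldl_cat /= (Ts_comm _ eab).
by rewrite IH1 IH2.
Qed.

Lemma Tsword_eqv w w' y : eqv e w w' -> Tsword Ts w y = Tsword Ts w' y.
Proof. by move=> /(eqv_sw esym eirr); apply: Tsword_sw. Qed.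

Lemma Tsword_cat w w' y : Tsword Ts (w ++ w') y = Tsword Ts w' (Tsword Ts w y).
Proof. by rewrite /Tsword foldl_cat. Qed.

Lemma ip_Tword s z y : ip (Tword T s z) y = ip z (Tsword Ts s y).
Proof. by elim: s y => //= a s IH y; rewrite Tadj IH. Qed.

Definition nrm2 (x : H) : R := complex.Re (ip x x).

Lemma nrm2_ge0 x : 0 <= nrm2 x.
Proof. by move: (ip_ge0 x); rewrite lecE => /andP [_]. Qed.

Lemma hnorm_sq x : hnorm ip x ^+ 2 = nrm2 x.
Proof. by rewrite /hnorm sqr_sqrtr // nrm2_ge0. Qed.

Lemma Re_sign k (z : R[i]) : complex.Re ((-1) ^+ k * z) = (-1) ^+ k * complex.Re z.
Proof.
rewrite -signr_odd -[in RHS]signr_odd; case: (odd k); rewrite /= ?expr1 ?expr0 ?mulN1r ?mul1r //.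
by rewrite raddfN.
Qed.


Hypothesis HB : weak_Brehmer T Ts ip e.

Definition nc (U : {set 'I_n}) (y : H) : R :=
  if is_clique e U then nrm2 (Tsword Ts (enum U) y) else 0.
Definition qf (A K : {set 'I_n}) (x : H) : R :=
  \sum_(U : {set 'I_n} | U \subset nbhd_in e A K) (-1) ^+ #|U| * nc U (Tsword Ts (enum K) x).

Lemma Re_ipTT (U : {set 'I_n}) (y : H) : complex.Re (ip (TjoinTjoinstar T Ts e U y) y) = nc U y.
Proof.
rewrite /TjoinTjoinstar /nc; case: ifP => _; first by rewrite ip_Tword.
by rewrite ip0l.
Qed.

Lemma qf_ge0 v (K : {set 'I_n}) (x : H) : K \subset compl_component e v -> is_clique e K ->
  0 <= qf (compl_component e v) K x.
Proof.
move=> KA cK; have := HB KA cK (Tsword Ts (enum K) x).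
rewrite ip_sum lecE => /andP [_]; rewrite raddf_sum /=.
congr (_ <= _); apply: eq_bigr => U _.
by rewrite ipZl Re_sign Re_ipTT.
Qed.

Lemma nbhd_notin (A K : {set 'I_n}) j : j \in nbhd_in e A K -> j \notin K.
Proof.
rewrite inE => /andP [_ /forall_inP Hf]; apply/negP => jK.
by move: (Hf j jK); rewrite eirr.
Qed.

Lemma nbhd_adj (A K : {set 'I_n}) j k : j \in nbhd_in e A K -> k \in K -> e j k.
Proof. by rewrite inE => /andP [_ /forall_inP Hf] /Hf. Qed.

Lemma nbhd_sub (A K : {set 'I_n}) : nbhd_in e A K \subset A.
Proof. by apply/subsetP => j; rewrite inE => /andP []. Qed.

Lemma clique_enum (U : {set 'I_n}) :
  is_clique e U -> forall x y, x \in enum U -> y \in enum U -> x != y -> e x y.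
Proof. by move=> /cliqueP cU x y; rewrite !mem_enum; apply: cU. Qed.

Lemma nc_cat (A K U : {set 'I_n}) (x : H) : is_clique e K -> U \subset nbhd_in e A K ->
  nc U (Tsword Ts (enum K) x) = nc (K :|: U) x.
Proof.
move=> cK UN.
have disj j : j \in U -> j \notin K by move=> /(subsetP UN); apply: nbhd_notin.
have adj j k : j \in U -> k \in K -> e j k by move=> /(subsetP UN); apply: nbhd_adj.
have cE : is_clique e (K :|: U) = is_clique e U.
  apply/cliqueP/cliqueP => Hc i j.
    by move=> iU jU; apply: Hc; rewrite in_setU ?iU ?jU orbT.
  rewrite !in_setU => /orP [iK|iU] /orP [jK|jU] nij.
  - by move/cliqueP: cK; apply.
  - by rewrite esym; apply: adj.
  - exact: adj.
  - exact: Hc.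
rewrite /nc cE; case: ifP => cU //.
rewrite -Tsword_cat; congr nrm2; apply: Tsword_eqv.
have cKU : is_clique e (K :|: U) by rewrite cE.
apply: eqv_clique => //.
  apply: uniq_perm.
  - rewrite cat_uniq !enum_uniq /= andbT; apply/hasPn => y.
    by rewrite !mem_enum => /disj.
  - exact: enum_uniq.
  - by move=> y; rewrite mem_cat !mem_enum in_setU.
by move=> y z; rewrite !mem_cat !mem_enum -!in_setU; move/cliqueP: cKU; apply.
Qed.

Lemma tog_sup a (U K : {set 'I_n}) : a \notin U -> (U \subset tog a K) = (U \subset K).
Proof.
move=> aU; rewrite /tog; case: ifP => aK; apply/subsetP/subsetP => Hs x xU.
- by move: (Hs x xU); rewrite in_setD1 => /andP [].
- by rewrite in_setD1 (Hs x xU) andbT; apply: contraNneq aU => <-.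
- by move: (Hs x xU); rewrite in_setU1 => /orP [/eqP E|//]; rewrite -E xU in aU.
- by rewrite in_setU1 (Hs x xU) orbT.
Qed.

Lemma setD_tog a (K L : {set 'I_n}) : a \in L -> L :\: tog a K = tog a (L :\: K).
Proof.
move=> aL; rewrite /tog in_setD aL andbT; case aK: (a \in K) => /=;
  apply/setP => x; rewrite !inE; case: (eqVneq x a) => [->|] //=; by rewrite ?aK ?aL.
Qed.

Lemma Wchar (A K L W : {set 'I_n}) :
  (W \subset nbhd_in e A K) && (K :|: W == L) =
  [&& K \subset L, L :\: K \subset nbhd_in e A K & W == L :\: K].
Proof.
apply/idP/idP.
  move=> /andP [WN /eqP <-].
  have WK : W :\: K = W.
    by apply/setP => x; rewrite in_setD; case xW: (x \in W); rewrite ?andbF ?andbT // (nbhd_notin (subsetP WN x xW)).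
  by rewrite subsetUl setDUl setDv set0U WK WN eqxx.
move=> /and3P [KL LKN /eqP ->]; rewrite LKN /=; apply/eqP/setP => x.
rewrite in_setU in_setD; case xK: (x \in K) => //=.
by rewrite (subsetP KL x xK).
Qed.

Lemma F0 v (U : {set 'I_n}) (x : H) : is_clique e U -> U \subset compl_component e v ->
  \sum_(K : {set 'I_n} | is_clique e K && (K \subset compl_component e v) && (U \subset K))
     qf (compl_component e v) K x = nc U x.
Proof.
set A := compl_component e v => cU UA.
pose G (K L : {set 'I_n}) : R := if (K \subset L) && (L :\: K \subset nbhd_in e A K)
   then (-1) ^+ #|L :\: K| * nc L x else 0.
have Ea K : is_clique e K -> qf A K x = \sum_(L : {set 'I_n}) G K L.
  move=> cK; rewrite /qf.
  rewrite (eq_bigr (fun W : {set 'I_n} => (-1) ^+ #|W| * nc (K :|: W) x)); last first.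
    by move=> W WN; rewrite (nc_cat _ cK WN).
  rewrite (partition_big (fun W => K :|: W) xpredT) //=.
  apply: eq_bigr => L _.
  rewrite (eq_bigl (fun W => [&& K \subset L, L :\: K \subset nbhd_in e A K & W == L :\: K]));
    last by move=> W; rewrite Wchar.
  rewrite /G; case: ifP => Hc.
    rewrite (big_pred1 (L :\: K)); last by move=> W; rewrite /= andbA Hc.
    congr (_ * _); congr nc; apply/setP => y; rewrite in_setU in_setD.
    case yK: (y \in K) => //=; move: Hc => /andP [/subsetP KL _]; by rewrite KL.
  by rewrite big_pred0 // => W; rewrite /= andbA Hc.
rewrite (eq_bigr (fun K => \sum_(L : {set 'I_n}) G K L)); last first.
  by move=> K /andP [/andP [cK _] _]; apply: Ea.
rewrite exchange_big /=.
rewrite (eq_bigr (fun L : {set 'I_n} => if L == U then nc U x else 0)); last first.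
  move=> L _.
  case cL: (is_clique e L); last first.
    have -> : (L == U) = false by apply: contraFF cL => /eqP ->.
    by rewrite big1 // => K _; rewrite /G /nc cL; case: ifP; rewrite ?mulr0.
  case LA: (L \subset A); last first.
    have -> : (L == U) = false by apply: contraFF LA => /eqP ->.
    rewrite big1 // => K /andP [/andP [_ KA] _]; rewrite /G; case: ifP => // /andP [KL LKN].
    move/negbT: LA => /negP []; apply/subsetP => y yL.
    case yK: (y \in K); first exact: (subsetP KA).
    by apply: (subsetP (nbhd_sub A K)); apply: (subsetP LKN); rewrite in_setD yK yL.
  have E : \sum_(K : {set 'I_n} | is_clique e K && (K \subset A) && (U \subset K)) G K L =
      \sum_(K : {set 'I_n} | (U \subset K) && (K \subset L)) (-1) ^+ #|L :\: K| * nc L x.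
    rewrite big_mkcond [in RHS]big_mkcond; apply: eq_bigr => K _ /=; rewrite /G.
    case UK: (U \subset K); case KL: (K \subset L); rewrite /= ?andbF ?andbT ?if_same //.
    have cK : is_clique e K.
      by apply/cliqueP => i j iK jK; move/cliqueP: cL; apply; apply: (subsetP KL).
    have KA : K \subset A by apply: subset_trans KL LA.
    have -> : L :\: K \subset nbhd_in e A K.
      apply/subsetP => y; rewrite in_setD => /andP [yK yL].
      rewrite inE (subsetP LA y yL) /=; apply/forall_inP => k kK.
      move/cliqueP: cL; apply => //; first exact: (subsetP KL).
      by apply: contraNneq yK => ->.
    by rewrite cK KA.
  rewrite E -mulr_suml.
  case: (eqVneq L U) => [->|nLU].
    rewrite (big_pred1 U); first by rewrite setDv cards0 expr0 mul1r.
    by move=> K /=; rewrite eq_sym eqEsubset.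
  suff -> : \sum_(K : {set 'I_n} | (U \subset K) && (K \subset L)) (-1) ^+ #|L :\: K| = 0 :> R.
    by rewrite mul0r.
  case UL: (U \subset L); last first.
    by rewrite big_pred0 // => K /=; apply: contraFF UL => /andP [UK KL]; apply: subset_trans UK KL.
  have [a aLU] : exists a, a \in L :\: U.
    apply/set0Pn; rewrite setD_eq0; apply: contra nLU => LU.
    by rewrite eqEsubset LU UL.
  move: aLU; rewrite in_setD => /andP [aU aL].
  apply: (tog_sum (a := a)) => K; first by rewrite tog_sup // tog_sub.
  by move=> _; rewrite setD_tog // sign_tog.
rewrite -big_mkcond /= big_pred1_eq //.
Qed.


Definition fh (h : H) (w : seq 'I_n) : R := nrm2 (Tsword Ts w h).

Lemma fh_eqv (h : H) w w' : eqv e w w' -> fh h w = fh h w'.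
Proof. by move=> E; rewrite /fh (Tsword_eqv _ E). Qed.

Lemma csum_ext k (S : {set 'I_n}) (f g : seq 'I_n -> R) : (forall w, f w = g w) -> csum e k S f = csum e k S g.
Proof. by move=> Hfg; rewrite /csum; apply: eq_bigr => t _; rewrite Hfg. Qed.

Lemma csum_sum k (S : {set 'I_n}) (I : finType) (P : pred I) (g : I -> seq 'I_n -> R) :
  csum e k S (fun p => \sum_(i | P i) g i p) = \sum_(i | P i) csum e k S (g i).
Proof.
rewrite /csum (eq_bigr (fun t : k.-tuple 'I_n => \sum_(i | P i) g i t / (cls e k t)%:R)).
  by rewrite exchange_big.
by move=> t _; rewrite mulr_suml.
Qed.

Lemma csum_ge0 k (S : {set 'I_n}) (f : seq 'I_n -> R) : (forall w, 0 <= f w) -> 0 <= csum e k S f.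
Proof. by move=> Hf; apply: sumr_ge0 => t _; apply: divr_ge0 => //; apply: ler0n. Qed.

Definition omega (S : {set 'I_n}) := \max_(K : {set 'I_n} | is_clique e K && (K \subset S)) #|K|.

Lemma clique0 : is_clique e set0.
Proof. by apply/cliqueP => i j; rewrite in_set0. Qed.

Lemma nc0 y : nc set0 y = nrm2 y.
Proof. by rewrite /nc clique0 enum_set0. Qed.

Lemma step v (S : {set 'I_n}) (h : H) m : compl_component e v \subset S ->
  (forall a b, a \in compl_component e v -> b \in S -> b \notin compl_component e v -> e a b) ->
  csum e m S (fh h) <= iter (omega (compl_component e v)) psig
     (fun k => csum e k (S :\: compl_component e v) (fh h)) m.
Proof.
set A := compl_component e v => AS Hadj.
pose r (K : {set 'I_n}) k := csum e k S (fun p => qf A K (Tsword Ts p h)).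
have r_ge0 (K : {set 'I_n}) : K \subset A -> is_clique e K -> forall k, 0 <= r K k.
  by move=> KA cK k; apply: csum_ge0 => w; apply: qf_ge0.
have E1 : csum e m S (fh h) = \sum_(K : {set 'I_n} | is_clique e K && (K \subset A)) r K m.
  rewrite -csum_sum; apply: csum_ext => p.
  rewrite /fh -nc0 -(F0 (Tsword Ts p h) clique0 (sub0set A)).
  by apply: eq_bigl => K; rewrite sub0set andbT.
have E2 k : csum e k (S :\: A) (fh h) =
    \sum_(K : {set 'I_n} | is_clique e K && (K \subset A)) Dk K (r K) k.
  rewrite -(IA esym eirr k AS Hadj (fh_eqv h)).
  pose F (U K : {set 'I_n}) := if (#|U| <= k)%N then (-1) ^+ #|U| * r K (k - #|U|)%N else 0.
  rewrite (eq_bigr (fun U : {set 'I_n} => \sum_(K : {set 'I_n} | is_clique e K && (K \subset A) && (U \subset K)) F U K)); last first.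
    move=> U /andP [cU UA]; rewrite /F; case: ifP => _; last by rewrite big1.
    rewrite -mulr_sumr; congr (_ * _).
    rewrite /r -csum_sum; apply: csum_ext => p.
    by rewrite /= (F0 _ cU UA) /fh Tsword_cat /nc cU.
  rewrite (exchange_big_dep (fun K : {set 'I_n} => is_clique e K && (K \subset A))) /=; last first.
    by move=> U K _ /andP [].
  apply: eq_bigr => K /andP [cK KA]; rewrite /Dk; apply: eq_bigl => U.
  case UK: (U \subset K); rewrite ?andbF ?andbT //.
  have -> : is_clique e U by apply/cliqueP => i j iU jU; move/cliqueP: cK; apply; apply: (subsetP UK).
  by rewrite (subset_trans UK KA) cK KA.
have E3 : iter (omega A) psig (fun k => csum e k (S :\: A) (fh h)) =
    fun m => \sum_(K : {set 'I_n} | is_clique e K && (K \subset A)) iter (omega A) psig (Dk K (r K)) m.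
  by rewrite (functional_extensionality _ _ E2) iter_sig_sum.
rewrite E1 E3; apply: ler_sum => K /andP [cK KA].
have HK : (#|K| <= omega A)%N by apply: leq_bigmax_cond; rewrite cK KA.
rewrite -(subnK HK) iterD iter_sig_Dk.
by apply: iter_sig_ge; apply: r_ge0.
Qed.


Definition closedS (S : {set 'I_n}) :=
  forall u w, u \in S -> connect (compl_rel e) u w -> w \in S.
Definition e0 (h : H) (k : nat) : R := if k == 0%N then nrm2 h else 0.

Lemma e0_ge0 h k : 0 <= e0 h k.
Proof. by rewrite /e0; case: ifP => _; rewrite ?nrm2_ge0. Qed.

Lemma csum_set0 k (f : seq 'I_n -> R) : csum e k set0 f = if k == 0%N then f [::] else 0.
Proof.
case: k => [|k] /=.
  rewrite /csum (big_pred1 [tuple]); last first.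
    by move=> t; rewrite (tuple0 t) /= eqxx.
  have -> : cls e 0 [tuple] = 1%N.
    rewrite /cls; apply: (@eq_card1 _ [tuple]) => t; rewrite (tuple0 t) !inE.
    exact: eqv_refl.
  by rewrite divr1.
rewrite /csum big_pred0 // => t; case: t => [[|x s] Hs] //=.
by rewrite /allin /= in_set0.
Qed.

Lemma omega_witness (X : {set 'I_n}) : exists K, [/\ is_clique e K, K \subset X & #|K| = omega X].
Proof.
have P0 : is_clique e set0 && (set0 \subset X) by rewrite clique0 sub0set.
case: (@arg_maxnP _ set0 (fun K : {set 'I_n} => is_clique e K && (K \subset X)) (fun K : {set 'I_n} => #|K|) P0) => K /andP [cK KX] Hmax.
exists K; split => //; apply/eqP; rewrite eqn_leq; apply/andP; split.
  by apply: leq_bigmax_cond; rewrite cK KX.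
by apply/bigmax_leqP => K' /Hmax.
Qed.

Lemma omega_add (A S : {set 'I_n}) : A \subset S ->
  (forall a b, a \in A -> b \in S -> b \notin A -> e a b) ->
  (omega A + omega (S :\: A) <= omega S)%N.
Proof.
move=> AS Hadj.
have [KA [cA KAA <-]] := omega_witness A.
have [KB [cB KBB <-]] := omega_witness (S :\: A).
have disj : KA :&: KB = set0.
  apply/setP => x; rewrite !inE; apply/negbTE/negP => /andP [xA xB].
  by move: (subsetP KBB x xB); rewrite in_setD (subsetP KAA x xA).
have <- : #|KA :|: KB| = (#|KA| + #|KB|)%N by rewrite cardsU disj cards0 subn0.
apply: leq_bigmax_cond; apply/andP; split.
  apply/cliqueP => i j; rewrite !in_setU => /orP [iA|iB] /orP [jA|jB] nij.
  - by move/cliqueP: cA; apply.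
  - move: (subsetP KBB j jB); rewrite in_setD => /andP [jnA jS].
    exact: Hadj (subsetP KAA i iA) jS jnA.
  - move: (subsetP KBB i iB); rewrite in_setD => /andP [inA iS].
    by rewrite esym; exact: Hadj (subsetP KAA j jA) iS inA.
  - by move/cliqueP: cB; apply.
apply/subsetP => x; rewrite in_setU => /orP [/(subsetP KAA)/(subsetP AS)//|/(subsetP KBB)].
by rewrite in_setD => /andP [].
Qed.

Lemma compl_sym : connect_sym (compl_rel e).
Proof.
apply: sym_connect_sym => i j; rewrite /compl_rel eq_sym.
by rewrite esym.
Qed.

Lemma IND (S : {set 'I_n}) : closedS S -> forall h m,
  csum e m S (fh h) <= iter (omega S) psig (e0 h) m.
Proof.
elim: {S}_.+1 {-2}S (ltnSn #|S|) => // N IH S ltSN clS h m.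
case: (set_0Vmem S) => [E|[v vS]].
  subst S; rewrite csum_set0 -/(e0 h m) /fh /=.
  by apply: iter_sig_ge => k; apply: e0_ge0.
set A := compl_component e v.
have AS : A \subset S by apply/subsetP => u; rewrite inE => cvu; apply: clS cvu.
have Hadj a b : a \in A -> b \in S -> b \notin A -> e a b.
  move=> aA bS bA; have nab' : a != b by apply: contraNneq bA => <-.
  apply/negPn/negP => nab; move/negP: bA; apply.
  move: aA; rewrite !inE => cva; apply: (connect_trans cva); apply: connect1.
  by rewrite /compl_rel nab' nab.
have clB : closedS (S :\: A).
  move=> u w; rewrite in_setD => /andP [uA uS] cuw; rewrite in_setD (clS _ _ uS cuw) andbT.
  apply: contra uA; rewrite !inE => cvw; apply: (connect_trans cvw).
  by rewrite compl_sym.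
have ltB : (#|S :\: A| < N)%N.
  have HB' : (#|S :\: A| < #|S|)%N.
    apply: proper_card; apply/properP; split; first exact: subsetDl.
    by exists v => //; rewrite in_setD vS andbT negbK inE connect0.
  by apply: leq_trans HB' _; rewrite -ltnS.
apply: le_trans (step h m AS Hadj) _.
apply: le_trans (iter_sig_le _ (fun k => IH _ ltB clB h k) m) _.
rewrite -iterD; apply: iter_sig_mono; first by move=> k; apply: e0_ge0.
exact: omega_add.
Qed.

Lemma roots_csum m (f : seq 'I_n -> R) : (forall w w', eqv e w w' -> f w = f w') ->
  \sum_(w : m.-tuple 'I_n | fingraph.root (@word_step n e m) w == w) f w = csum e m setT f.
Proof.
move=> Hf.
have csym : connect_sym (@word_step n e m).
  by move=> x y; rewrite -!(eqv_connect esym eirr) eqv_sym.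
have Heq t r : fingraph.root (@word_step n e m) r = r ->
    (fingraph.root (@word_step n e m) t == r) = eqv e t r.
  move=> Hr; rewrite (eqv_connect esym eirr); apply/eqP/idP => [Ht|].
    by apply/(fingraph.rootP csym); rewrite Ht Hr.
  by move/(fingraph.rootP csym) => ->.
rewrite /csum [RHS](eq_bigl (fun t : m.-tuple 'I_n => true)); last first.
  by move=> t; apply/allP => x _; rewrite inE.
rewrite [RHS](partition_big (fingraph.root (@word_step n e m))
   (fun r => fingraph.root (@word_step n e m) r == r)); last first.
  by move=> t _; rewrite (root_root csym).
apply: eq_bigr => r /eqP Hr.
rewrite (eq_big (fun t : m.-tuple 'I_n => eqv e t r) (fun t : m.-tuple 'I_n => f r / (cls e m t)%:R)).
- by rewrite sum_cls ?size_tuple.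
- by move=> t /=; rewrite Heq.
- move=> t /= Ht; rewrite Heq // in Ht.
  by rewrite (Hf _ _ Ht).
Qed.

End Main.

Unset Implicit Arguments.
Local Open Scope ring_scope.

Theorem lemma4p3 (R : realType) (H : lmodType R[i]) (ip : H -> H -> R[i])
  (n : nat) (e : rel 'I_n) (T Ts : 'I_n -> H -> H) :
  is_inner_product ip -> hilbert_complete ip ->
  simple_graph e ->
  Gamma_family T Ts ip e ->
  weak_Brehmer T Ts ip e ->
  forall (m : nat) (h : H), (1 <= m)%N ->
    \sum_(w : m.-tuple 'I_n | fingraph.root (@word_step n e m) w == w)
        hnorm ip (Tsword Ts w h) ^+ 2
    <= ('C(clique_number e + m - 1, m))%:R * hnorm ip h ^+ 2.
Proof.
move=> Hip _ Hg HF HB m h _.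
rewrite (eq_bigr (fun w : m.-tuple 'I_n => fh ip Ts h w)); last first.
  by move=> w _; rewrite (hnorm_sq Hip).
have esym : symmetric e by case: Hg.
have eirr : irreflexive e by case: Hg.
rewrite (roots_csum Hg m (fh_eqv Hip Hg HF h)).
have clT : closedS e [set: 'I_n] by move=> u w _ _; rewrite inE.
apply: Order.POrderTheory.le_trans (IND Hip Hg HF HB clT h m) _.
rewrite iter_sig_e0 (hnorm_sq Hip).
have -> : omega e [set: 'I_n] = clique_number e.
  by rewrite /omega /clique_number; apply: eq_bigl => K; rewrite subsetT andbT.
by [].
Qed.
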